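(* Let $s=6r+i$ with $r\ge1$ and $i\in\{0,\dots,5\}$. Among all polyiamonds with site-perimeter $s$, the maximal area is attained by the quasi-regular hexagon $E_{B_i}(r)$ (with $E_{B_0}(r)=E(r)$), and every polyiamond with site-perimeter $s$ attaining this maximal area is a quasi-regular hexagon (an image of $E_{B_i}(r)$ under a symmetry of $\mathbb T^2$).
   Context: Faces are the closed triangular faces of the triangular lattice $\mathbb T^2$ in $\mathbb R^2$. A polyiamond $P$ is a finite nonempty union of faces that is connected through shared edges (two faces sharing only a vertex are not adjacent); faces not in $P$ are empty faces. Its area $\|P\|$ is the number of its faces; its edge-perimeter $p(P)$ is the number of edges of $\mathbb T^2$ separating a face of $P$ from an empty face; its site-perimeter $s(P)$ is the number of empty faces sharing at least one edge with a face of $P$. For integers $d\ge1$, $a,b,c\ge0$ with $a+b,b+c,c+a\le d$, $T^d_{a,b,c}$ is the polyiamond obtained from an equilateral triangle of side length $d$ with sides on lattice lines (the union of its $d^2$ faces) by removing the equilateral sub-triangles of side lengths $a,b,c$ at its three corners; its boundary is a (possibly degenerate) hexagon with side lengths, in cyclic order, $a,\ d-a-b,\ b,\ d-b-c,\ c,\ d-c-a$, its area is $d^2-a^2-b^2-c^2$ and its edge- and site-perimeter equal $3d-a-b-c$. Quasi-regular hexagons: for $r\ge1$ let $E(r)=T^{3r}_{r,r,r}$ (regular hexagon of side $r$), $E_{B_1}(r)=T^{3r}_{r-1,r,r}$, $E_{B_2}(r)=T^{3r+1}_{r,r,r+1}$, $E_{B_3}(r)=T^{3r+1}_{r,r,r}$,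 $E_{B_4}(r)=T^{3r+2}_{r,r+1,r+1}$, $E_{B_5}(r)=T^{3r+2}_{r,r,r+1}$. Their areas are $6r^2,\ 6r^2+2r-1,\ 6r^2+4r,\ 6r^2+6r+1,\ 6r^2+8r+2,\ 6r^2+10r+3$, and their edge-perimeters (equal to their site-perimeters) are $6r,6r+1,\dots,6r+5$. A quasi-regular hexagon is any image of one of these under a symmetry (translation, rotation, reflection) of $\mathbb T^2$; $\mathcal Q$ denotes the set of all quasi-regular hexagons. *)

(* Defs.v *)
From HB Require Import structures.
From mathcomp Require Import all_boot all_order all_algebra.
From mathcomp Require Import finmap.
Set Implicit Arguments. Unset Strict Implicit. Unset Printing Implicit Defensive.
Import Order.TTheory GRing.Theory Num.Theory.
Local Open Scope fset_scope.
Local Open Scope ring_scope.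

(* Lattice vertices are u*e1 + v*e2 with e1 = (1,0), e2 = (1/2, sqrt 3/2),
   (u, v) in Z^2.  Faces:
     (x, y, true)  = up face   with vertices (x,y), (x+1,y), (x,y+1);
     (x, y, false) = down face with vertices (x+1,y), (x,y+1), (x+1,y+1). *)
Definition face := (int * int * bool)%type.
Definition Up (x y : int) : face := (x, y, true).
Definition Down (x y : int) : face := (x, y, false).

Definition nbrs (f : face) : seq face :=
  let: (x, y, b) := f in
  if b then [:: Down x y; Down (x - 1) y; Down x (y - 1)]
  else [:: Up x y; Up (x + 1) y; Up x (y + 1)].

Definition adj (f g : face) : bool := g \in nbrs f.

Definition edge_connected (P : {fset face}) : Prop :=
  forall f g, f \in P -> g \in P ->
    exists p : seq face, [/\ path adj f p, last f p = g & all (fun h => h \in P) p].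

Definition polyiamond (P : {fset face}) : Prop := P != fset0 /\ edge_connected P.

Definition area (P : {fset face}) : nat := #|` P|.

Definition site_boundary (P : {fset face}) : {fset face} :=
  [fset g | g in flatten [seq nbrs f | f <- enum_fset P] & g \notin P].

Definition site_perimeter (P : {fset face}) : nat := #|` site_boundary P|.

Definition transl (a b : int) (f : face) : face :=
  let: (x, y, o) := f in (x + a, y + b, o).
(* rotation by 60 degrees about the origin: (u,v) |-> (-v, u+v) *)
Definition rot60 (f : face) : face :=
  let: (x, y, o) := f in
  if o then Down (- y - 1) (x + y) else Up (- y - 1) (x + y + 1).
Definition refl (f : face) : face :=
  let: (x, y, o) := f in (y, x, o).

(* Every symmetry of the triangular lattice is of this form
   (translation o rotation^k o reflection^e). *)
Definition lattice_sym (g : face -> face) : Prop :=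
  exists (a b : int) (k : nat) (e : bool),
    g =1 (fun f => transl a b (iter k rot60 (if e then refl f else f))).

(* T^d_{a,b,c}: triangle {u >= 0, v >= 0, u + v <= d} minus the corner
   triangles of side a at (0,0), b at (d,0), c at (0,d). *)
Definition in_T (d a b c : nat) (f : face) : bool :=
  let: (x, y, o) := f in
  [&& 0 <= x, 0 <= y, x < (d - b)%:Z, y < (d - c)%:Z &
   if o then (a%:Z <= x + y) && (x + y <= d%:Z - 1)
   else (a%:Z <= x + y + 1) && (x + y <= d%:Z - 2)].

Definition T_cand (d : nat) : seq face :=
  flatten (flatten [seq [seq [:: Up x%:Z y%:Z; Down x%:Z y%:Z] | y <- iota 0 d] | x <- iota 0 d]).

Definition Tpoly (d a b c : nat) : {fset face} :=
  [fset f | f in T_cand d & in_T d a b c f].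

Definition EB (i r : nat) : {fset face} :=
  match i with
  | 0 => Tpoly (3 * r) r r r
  | 1 => Tpoly (3 * r) r.-1 r r
  | 2 => Tpoly (3 * r).+1 r r r.+1
  | 3 => Tpoly (3 * r).+1 r r r
  | 4 => Tpoly (3 * r).+2 r r.+1 r.+1
  | _ => Tpoly (3 * r).+2 r r r.+1
  end.

(* Main.v *)
Require Import Defs.
From mathcomp Require Import all_boot all_order all_algebra.
From mathcomp Require Import finmap.
From mathcomp Require Import zify.

Module Aux.
Set Implicit Arguments. Unset Strict Implicit. Unset Printing Implicit Defensive.
Local Open Scope fset_scope.
Import Order.TTheory GRing.Theory Num.Theory.
Local Open Scope ring_scope.


Lemma mem_sb (P : {fset face}) g : (g \in site_boundary P) = (g \notin P) && has (fun f => g \in nbrs f) P.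
Proof.
rewrite /site_boundary.
apply/imfsetP/andP => [[h]|].
  rewrite inE /= => /andP[h1 h2] ->. split=>//. apply/hasP.
  move/flatten_mapP: h1 => [f hf hg]. by exists f.
case=> h1 /hasP [f hf hg]. exists g => //. rewrite inE /= h1 andbT.
apply/flatten_mapP. by exists f.
Qed.

Lemma mem_Tpoly d a b c f : (f \in Tpoly d a b c) = in_T d a b c f.
Proof.
rewrite /Tpoly. apply/imfsetP/idP => [[h]|].
  by rewrite inE /= => /andP[_ ?] ->.
move=> hin; exists f => //. rewrite inE /= hin andbT.
move: hin; case: f => [[x y] o] /= /and5P[hx hy hxb hyc _].
case: x hx hxb => // xn _ hxb; case: y hy hyc => // yn _ hyc.
have hxn : (xn < d)%N by move: hxb; rewrite ltz_nat => /leq_trans; apply; apply: leq_subr.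
have hyn : (yn < d)%N by move: hyc; rewrite ltz_nat => /leq_trans; apply; apply: leq_subr.
rewrite /T_cand. apply/flattenP. exists [:: Up xn yn; Down xn yn]; last first.
  by case: o; rewrite !inE eqxx ?orbT.
apply/flatten_mapP. exists xn; first by rewrite mem_iota.
by apply/mapP; exists yn; rewrite // mem_iota.
Qed.

Definition fx (f : face) : int := f.1.1.
Definition fy (f : face) : int := f.1.2.
Definition dn (f : face) : int := if f.2 then 0 else 1.
Definition fw (f : face) : int := fx f + fy f + dn f.
Definition keyX (f : face) : int := 2 * fx f + dn f.
Definition keyY (f : face) : int := 2 * fy f + dn f.

Definition predx (f : face) : face :=
  let: (x, y, o) := f in if o then Down x (y - 1) else Up x y.
Definition succy (f : face) : face :=
  let: (x, y, o) := f in if o then Down x y else Up (x + 1) y.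
Definition predw (f : face) : face :=
  let: (x, y, o) := f in if o then Down (x - 1) y else Up x (y + 1).

Lemma face_eq (x y x' y' : int) (o o' : bool) :
  ((x, y, o) == (x', y', o') :> face) = [&& x == x', y == y' & o == o'].
Proof. by rewrite !xpair_eqE andbA. Qed.

Ltac dface f := let x := fresh "x" in let y := fresh "y" in case: f => [[x y] []].

Lemma adj_sym f g : adj f g = adj g f.
Proof.
rewrite /adj; dface f; dface g; rewrite /= !inE /Up /Down !face_eq /=; lia.
Qed.

Lemma adj_lip f g : adj f g ->
  [/\ -1 <= fx f - fx g <= 1, -1 <= fy f - fy g <= 1 & -1 <= fw f - fw g <= 1].
Proof.
rewrite /adj; dface f; dface g; rewrite /= !inE /Up /Down !face_eq /fw /dn /fx /fy /=.
all: move=> H; split; lia.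
Qed.

Lemma ex_min (T : eqType) (s : seq T) (k : T -> int) : s != [::] ->
  exists2 h, h \in s & forall h', h' \in s -> k h <= k h'.
Proof.
elim: s => // a [|b s] IH _.
  by exists a; rewrite ?inE // => h'; rewrite inE => /eqP ->.
have [h hin hmin] := IH isT.
have [hle|hlt] := lerP (k a) (k h).
  exists a; first by rewrite inE eqxx.
  move=> h'; rewrite inE => /orP[/eqP->//|/hmin]; exact: le_trans.
exists h; first by rewrite inE hin orbT.
move=> h'; rewrite inE => /orP[/eqP->|/hmin//]; exact: ltW.
Qed.

Lemma ex_max (T : eqType) (s : seq T) (k : T -> int) : s != [::] ->
  exists2 h, h \in s & forall h', h' \in s -> k h' <= k h.
Proof.
move=> /(ex_min (fun h => - k h)) [h hin hm]; exists h => // h' /hm; lia.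
Qed.

Lemma fill (P : {fset face}) (k : face -> int)
  (hk : forall f g, adj f g -> -1 <= k f - k g <= 1) f p :
  path adj f p -> all (fun h => h \in P) p -> f \in P ->
  forall v, k f <= v <= k (last f p) -> exists2 h, h \in P & k h = v.
Proof.
elim: p f => [|g p IH] f /=.
  move=> _ _ hf v hv; exists f => //; lia.
move=> /andP[hfg hp] /andP[hg hall] hf v hv.
have [->|hne] := eqVneq v (k f); first by exists f.
apply: (IH g hp hall hg).
have := hk _ _ hfg; lia.
Qed.

Section PartA.
Variable P : {fset face}.

Definition minX f := all (fun h => (fx h == fx f) ==> (keyY f <= keyY h)) P.
Definition maxY f := all (fun h => (fy h == fy f) ==> (- keyX f <= - keyX h)) P.
Definition minW f := all (fun h => (fw h == fw f) ==> (keyX f <= keyX h)) P.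

Definition Gx := [fset predx f | f in P & minX f].
Definition Gy := [fset succy f | f in P & maxY f].
Definition Gw := [fset predw f | f in P & minW f].

Lemma Gx_sb : Gx `<=` site_boundary P.
Proof.
apply/fsubsetP => g /imfsetP [f]; rewrite inE /= => /andP[hf hm] ->.
rewrite mem_sb; apply/andP; split.
  apply/negP => hp; move/allP: hm => /(_ _ hp).
  by clear hf hp; dface f; rewrite /keyY /fx /fy /dn /Up /Down /=; lia.
apply/hasP; exists f => //; by clear hf hm; dface f; rewrite /= !inE eqxx ?orbT.
Qed.

Lemma Gy_sb : Gy `<=` site_boundary P.
Proof.
apply/fsubsetP => g /imfsetP [f]; rewrite inE /= => /andP[hf hm] ->.
rewrite mem_sb; apply/andP; split.
  apply/negP => hp; move/allP: hm => /(_ _ hp).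
  by clear hf hp; dface f; rewrite /keyX /fy /fx /dn /Up /Down /=; lia.
apply/hasP; exists f => //; by clear hf hm; dface f; rewrite /= !inE eqxx ?orbT.
Qed.

Lemma Gw_sb : Gw `<=` site_boundary P.
Proof.
apply/fsubsetP => g /imfsetP [f]; rewrite inE /= => /andP[hf hm] ->.
rewrite mem_sb; apply/andP; split.
  apply/negP => hp; move/allP: hm => /(_ _ hp).
  by clear hf hp; dface f; rewrite /keyX /fw /fy /fx /dn /Up /Down /=; lia.
apply/hasP; exists f => //; by clear hf hm; dface f; rewrite /= !inE eqxx ?orbT.
Qed.

Lemma Gxy : Gx `&` Gy == fset0. Proof.
  apply/eqP; apply/fsetP => g; rewrite !inE; apply/negP => /andP[].
  move=> /imfsetP [f1]; rewrite inE /= => /andP[hf1 hm1] ->.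
  move=> /imfsetP [f2]; rewrite inE /= => /andP[hf2 hm2].
  move/allP: hm1 => /(_ _ hf2); move/allP: hm2 => /(_ _ hf1); clear hf1 hf2.
  dface f1; dface f2; rewrite /keyX /keyY /fw /fx /fy /dn /= /Up /Down;
  move=> h1 h2 /eqP; rewrite face_eq /=; lia.
Qed.
Lemma Gxw : Gx `&` Gw == fset0. Proof.
  apply/eqP; apply/fsetP => g; rewrite !inE; apply/negP => /andP[].
  move=> /imfsetP [f1]; rewrite inE /= => /andP[hf1 hm1] ->.
  move=> /imfsetP [f2]; rewrite inE /= => /andP[hf2 hm2].
  move/allP: hm1 => /(_ _ hf2); move/allP: hm2 => /(_ _ hf1); clear hf1 hf2.
  dface f1; dface f2; rewrite /keyX /keyY /fw /fx /fy /dn /= /Up /Down;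
  move=> h1 h2 /eqP; rewrite face_eq /=; lia.
Qed.
Lemma Gyw : Gy `&` Gw == fset0. Proof.
  apply/eqP; apply/fsetP => g; rewrite !inE; apply/negP => /andP[].
  move=> /imfsetP [f1]; rewrite inE /= => /andP[hf1 hm1] ->.
  move=> /imfsetP [f2]; rewrite inE /= => /andP[hf2 hm2].
  move/allP: hm1 => /(_ _ hf2); move/allP: hm2 => /(_ _ hf1); clear hf1 hf2.
  dface f1; dface f2; rewrite /keyX /keyY /fw /fx /fy /dn /= /Up /Down;
  move=> h1 h2 /eqP; rewrite face_eq /=; lia.
Qed.

Lemma count_strips (c kk : face -> int) (sel : face -> face) (c0 c1 : int) :
  (forall f, c (sel f) = c f) ->
  (forall v, c0 <= v <= c1 -> exists2 h, h \in P & c h = v) ->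
  c1 - c0 + 1 <= (#|` [fset sel f | f in P & all (fun h => (c h == c f) ==> (kk f <= kk h)) P] |)%:Z.
Proof.
move=> hsel hv.
set G := [fset sel f | f in P & _].
have [hlt|hle] := ltrP c1 c0; first lia.
pose n := absz (c1 - c0 + 1).
have hn : n%:Z = c1 - c0 + 1 by rewrite /n; lia.
pose I := [fset c0 + k%:Z | k in iota 0 n].
have cI : #|` I| = n.
  rewrite card_in_imfset /=; first by rewrite undup_id ?iota_uniq // size_iota.
  move=> k1 k2 _ _ /= h; lia.
have sI : I `<=` [fset c g | g in G].
  apply/fsubsetP => v /imfsetP [k]; rewrite /= mem_iota add0n => hk ->.
  have [h hP hc] := hv (c0 + k%:Z) ltac:(lia).
  have hne : [seq h' <- P | c h' == c h] != [::].
    by apply/eqP => /(congr1 (fun s => h \in s)); rewrite mem_filter hP eqxx.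
  have [hm] := ex_min kk hne.
  rewrite mem_filter => /andP[/eqP hmc hmP] hmin.
  apply/imfsetP; exists (sel hm); last by rewrite hsel hmc hc.
  apply/imfsetP; exists hm => //. rewrite inE /= hmP /=.
  apply/allP => h' hh'; apply/implyP => /eqP hc'.
  by apply: hmin; rewrite mem_filter hh' hc' hmc eqxx.
have := fsubset_leq_card sI; rewrite cI => h1.
have h2 : (#|` [fset c g | g in G]| <= #|` G|)%N by apply: leq_imfset_card.
have h3 := leq_trans h1 h2. clearbody n. lia.
Qed.

End PartA.

Lemma partA (P : {fset face}) (x0 x1 y0 y1 w0 w1 : int) :
  (forall v, x0 <= v <= x1 -> exists2 h, h \in P & fx h = v) ->
  (forall v, y0 <= v <= y1 -> exists2 h, h \in P & fy h = v) ->
  (forall v, w0 <= v <= w1 -> exists2 h, h \in P & fw h = v) ->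
  (x1 - x0 + 1) + (y1 - y0 + 1) + (w1 - w0 + 1) <= (site_perimeter P)%:Z.
Proof.
move=> hx hy hw.
have cx : x1 - x0 + 1 <= (#|` Gx P|)%:Z.
  apply: (@count_strips P fx keyY predx) => //.
  by move=> f; dface f.
have cy : y1 - y0 + 1 <= (#|` Gy P|)%:Z.
  apply: (@count_strips P fy (fun f => - keyX f) succy) => //.
  by move=> f; dface f.
have cw : w1 - w0 + 1 <= (#|` Gw P|)%:Z.
  apply: (@count_strips P fw keyX predw) => //.
  by move=> f; dface f; rewrite /fw /fx /fy /dn /= /Up /Down; lia.
have sub : Gx P `|` Gy P `|` Gw P `<=` site_boundary P.
  by rewrite !fsubUset Gx_sb Gy_sb Gw_sb.
have := fsubset_leq_card sub.
have := cardfsUI (Gx P `|` Gy P) (Gw P).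
have := cardfsUI (Gx P) (Gy P).
rewrite fsetIUl (eqP (Gxy P)) (eqP (Gxw P)) (eqP (Gyw P)) fsetU0 cardfs0 /site_perimeter.
lia.
Qed.


Lemma in_TE d a b c f : in_T d a b c f =
  [&& 0 <= fx f, 0 <= fy f, fx f < (d - b)%N%:Z, fy f < (d - c)%N%:Z,
      a%:Z <= fw f & fw f <= d%:Z - 1].
Proof. dface f; rewrite /= /fw /fx /fy /dn /=; lia. Qed.

Lemma mem_TpolyE d a b c f : (f \in Tpoly d a b c) =
  [&& 0 <= fx f, 0 <= fy f, fx f < (d - b)%N%:Z, fy f < (d - c)%N%:Z,
      a%:Z <= fw f & fw f <= d%:Z - 1].
Proof. by rewrite mem_Tpoly in_TE. Qed.

Lemma transl_can u v : cancel (transl u v) (transl (- u) (- v)).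
Proof. move=> f; dface f; rewrite /= !addrK //. Qed.
Lemma transl_can' u v : cancel (transl (- u) (- v)) (transl u v).
Proof. move=> f; dface f; rewrite /= !subrK //. Qed.

Lemma mem_transl (S : {fset face}) u v f :
  (f \in transl u v @` S) = (transl (- u) (- v) f \in S).
Proof.
apply/imfsetP/idP => [[g hg ->]|h]; first by rewrite transl_can.
by exists (transl (- u) (- v) f); rewrite ?transl_can'.
Qed.

Lemma card_transl (S : {fset face}) u v : #|` transl u v @` S| = #|` S|.
Proof. by rewrite card_imfset //; apply: (can_inj (transl_can u v)). Qed.

Lemma transl_coord u v f :
  [/\ fx (transl u v f) = fx f + u, fy (transl u v f) = fy f + v,
      fw (transl u v f) = fw f + u + v & (transl u v f).2 = f.2].
Proof. dface f; rewrite /fw /fx /fy /dn /=; split => //; lia. Qed.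

Definition tcode (n : nat) (f : face) : nat :=
  if f.2 then (absz (fx f) * n + absz (fy f))%N
  else ((n.-1 - absz (fx f)) * n + (n.-1 - absz (fy f)))%N.

Lemma code_inj n A B A' B' : (B < n)%N -> (B' < n)%N ->
  (A * n + B = A' * n + B')%N -> A = A' /\ B = B'.
Proof.
move=> hB hB' e.
have n0 : (0 < n)%N by lia.
have := congr1 (fun k => k %/ n)%N e; rewrite !divnMDl // !divn_small // !addn0 => eA.
by split=> //; move: e; rewrite eA => /addnI.
Qed.

Lemma card_tri n : #|` Tpoly n 0 0 0| = (n * n)%N.
Proof.
have /card_in_imfsetP/eqP <- : {in Tpoly n 0 0 0 &, injective (tcode n)}.
{ move=> f g; rewrite !mem_TpolyE /tcode.
  dface f; dface g; rewrite /fw /fx /fy /dn /= => hf hg e.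
  all: have [] := code_inj _ _ e; try lia.
  all: move=> e1 e2; apply/eqP; rewrite face_eq /=; lia. }
have -> : [fset tcode n x | x in Tpoly n 0 0 0] = [fset k | k in iota 0 (n * n)].
  apply/fsetP => k; apply/imfsetP/imfsetP => /=.
    case=> f; rewrite mem_TpolyE /tcode => hf ->; exists (tcode n f) => //.
    rewrite mem_iota add0n /tcode; move: hf; dface f; rewrite /fw /fx /fy /dn /= => hf.
      by have : (absz x * n + absz y < n * n)%N by nia.
    by have : ((n.-1 - absz x) * n + (n.-1 - absz y) < n * n)%N by nia.
  case=> k'; rewrite mem_iota add0n => hk ->.
  have n0 : (0 < n)%N by case: n hk.
  have eq := divn_eq k' n.
  have hA : (k' %/ n < n)%N by rewrite ltn_divLR.
  have hB : (k' %% n < n)%N by rewrite ltn_mod.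
  have [hs|hs] := leqP (k' %/ n + k' %% n) n.-1.
    exists (Up (k' %/ n)%:Z (k' %% n)%:Z).
      by rewrite mem_TpolyE /fw /fx /fy /dn /=; lia.
    by rewrite /tcode /=.
  exists (Down (n.-1 - k' %/ n)%:Z (n.-1 - k' %% n)%:Z).
    by rewrite mem_TpolyE /fw /fx /fy /dn /=; lia.
  rewrite /tcode /= /fx /fy /=.
  have -> : (n.-1 - (n.-1 - k' %/ n) = k' %/ n)%N by lia.
  have -> : (n.-1 - (n.-1 - k' %% n) = k' %% n)%N by lia.
  by [].
by rewrite card_fseq undup_id ?iota_uniq // size_iota.
Qed.

Lemma fx_transl u v f : fx (transl u v f) = fx f + u. Proof. by dface f. Qed.
Lemma fy_transl u v f : fy (transl u v f) = fy f + v. Proof. by dface f. Qed.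
Lemma fw_transl u v f : fw (transl u v f) = fw f + u + v.
Proof. dface f; rewrite /fw /fx /fy /dn /=; lia. Qed.

Lemma fw_bnd f : fx f + fy f <= fw f <= fx f + fy f + 1.
Proof. dface f; rewrite /fw /fx /fy /dn /=; lia. Qed.

Ltac msimpl := rewrite ?in_fsetI ?in_fsetU ?in_fsetI ?in_fsetU ?in_fset0 ?mem_transl ?mem_TpolyE
  ?fx_transl ?fy_transl ?fw_transl.

Lemma card_Tpoly d a b c : (a + b <= d)%N -> (b + c <= d)%N -> (c + a <= d)%N ->
  (#|` Tpoly d a b c| + a * a + b * b + c * c = d * d)%N.
Proof.
move=> hab hbc hca.
set R := Tpoly d a b c.
set Ca := Tpoly a 0 0 0.
set Cb := transl (d - b)%N%:Z 0 @` Tpoly b 0 0 0.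
set Cc := transl 0 (d - c)%N%:Z @` Tpoly c 0 0 0.
have E : Tpoly d 0 0 0 = R `|` Ca `|` Cb `|` Cc.
  apply/fsetP => f; rewrite /R /Ca /Cb /Cc; move: (fw_bnd f); msimpl; lia.
have d1 : R `&` Ca = fset0 by apply/fsetP => f; rewrite /R /Ca /Cb /Cc; move: (fw_bnd f); msimpl; lia.
have d2 : (R `|` Ca) `&` Cb = fset0 by apply/fsetP => f; rewrite /R /Ca /Cb /Cc; move: (fw_bnd f); msimpl; lia.
have d3 : (R `|` Ca `|` Cb) `&` Cc = fset0 by apply/fsetP => f; rewrite /R /Ca /Cb /Cc; move: (fw_bnd f); msimpl; lia.
have := card_tri d; rewrite E.
have := cardfsUI (R `|` Ca `|` Cb) Cc.
have := cardfsUI (R `|` Ca) Cb.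
have := cardfsUI R Ca.
rewrite d1 d2 d3 cardfs0 /Cb /Cc !card_transl /Ca !card_tri.
lia.
Qed.

Lemma fill_coord (P : {fset face}) (k : face -> int) :
  polyiamond P -> (forall f g, adj f g -> -1 <= k f - k g <= 1) ->
  exists k0 k1, [/\ forall h, h \in P -> k0 <= k h <= k1,
    (exists2 h, h \in P & k h = k0), (exists2 h, h \in P & k h = k1) &
    forall v, k0 <= v <= k1 -> exists2 h, h \in P & k h = v].
Proof.
move=> [hne hc] hk.
have hs : enum_fset P != [::].
  move/fset0Pn: hne => [f hf]; apply/eqP => e.
  have : f \in enum_fset P by []. by rewrite e.
have [h0 h0P hmin] := ex_min k hs.
have [h1 h1P hmax] := ex_max k hs.
exists (k h0), (k h1); split.
- by move=> h hP; rewrite hmin ?hmax.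
- by exists h0.
- by exists h1.
move=> v hv.
have [p [hp hl hall]] := hc h0 h1 h0P h1P.
apply: (fill hk hp hall h0P); by rewrite hl.
Qed.

Lemma lip_fx f g : adj f g -> -1 <= fx f - fx g <= 1. Proof. by case/adj_lip. Qed.
Lemma lip_fy f g : adj f g -> -1 <= fy f - fy g <= 1. Proof. by case/adj_lip. Qed.
Lemma lip_fw f g : adj f g -> -1 <= fw f - fw g <= 1. Proof. by case/adj_lip. Qed.

Lemma box (P : {fset face}) : polyiamond P -> exists (x0 y0 : int) (dn an bn cn : nat),
  [/\ (an + bn <= dn)%N, (bn + cn <= dn)%N, (cn + an <= dn)%N,
      (3 * dn <= site_perimeter P + an + bn + cn)%N &
      transl (- x0) (- y0) @` P `<=` Tpoly dn an bn cn].
Proof.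
move=> hP.
have [x0 [x1 [bx [hx0 hx0P hx0e] [hx1 hx1P hx1e] fx_]]] := fill_coord hP lip_fx.
have [y0 [y1 [by_ [hy0 hy0P hy0e] [hy1 hy1P hy1e] fy_]]] := fill_coord hP lip_fy.
have [w0 [w1 [bw [hw0 hw0P hw0e] [hw1 hw1P hw1e] fw_]]] := fill_coord hP lip_fw.
have pA := partA fx_ fy_ fw_.
have B := fun h (hh : h \in P) => (bx h hh, by_ h hh, bw h hh, fw_bnd h).
move: (B _ hx0P) (B _ hx1P) (B _ hy0P) (B _ hy1P) (B _ hw0P) (B _ hw1P).
rewrite hx0e hx1e hy0e hy1e hw0e hw1e => [[[[? ?] ?] ?]] [[[? ?] ?] ?] [[[? ?] ?] ?]
  [[[? ?] ?] ?] [[[? ?] ?] ?] [[[? ?] ?] ?].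
pose d := w1 + 1 - x0 - y0.
pose a := w0 - x0 - y0.
pose b := d - (x1 - x0 + 1).
pose c := d - (y1 - y0 + 1).
exists x0, y0, (absz d), (absz a), (absz b), (absz c).
split; rewrite /d /a /b /c; try lia.
apply/fsubsetP => g /imfsetP [h hh ->].
case: (B h hh) => [[[? ?] ?] ?]; rewrite mem_TpolyE fx_transl fy_transl fw_transl; lia.
Qed.


Definition line_y (u v : int) (o : bool) (n : nat) : {fset face} :=
  [fset ((u, v + k%:Z, o) : face) | k in iota 0 n].
Definition line_x (u v : int) (o : bool) (n : nat) : {fset face} :=
  [fset ((u + k%:Z, v, o) : face) | k in iota 0 n].
Definition line_d (u v : int) (o : bool) (n : nat) : {fset face} :=
  [fset ((u + k%:Z, v - k%:Z, o) : face) | k in iota 0 n].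

Lemma card_line_y u v o n : (#|` line_y u v o n| <= n)%N.
Proof. by apply: leq_trans (leq_imfset_card _ _ _) _; rewrite /= undup_id ?iota_uniq // size_iota. Qed.
Lemma card_line_x u v o n : (#|` line_x u v o n| <= n)%N.
Proof. by apply: leq_trans (leq_imfset_card _ _ _) _; rewrite /= undup_id ?iota_uniq // size_iota. Qed.
Lemma card_line_d u v o n : (#|` line_d u v o n| <= n)%N.
Proof. by apply: leq_trans (leq_imfset_card _ _ _) _; rewrite /= undup_id ?iota_uniq // size_iota. Qed.

Lemma mem_line_y u v o n g : (g \in line_y u v o n) =
  [&& g.2 == o, fx g == u, v <= fy g & fy g < v + n%:Z].
Proof.
apply/imfsetP/idP => [[k]|]; rewrite /= ?mem_iota.
  by move=> hk ->; rewrite /fx /fy /=; lia.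
move: g => [[x y] o'] /=; rewrite /fx /fy /= => h.
exists (absz (y - v)); first by rewrite mem_iota; lia.
apply/eqP; rewrite face_eq; lia.
Qed.
Lemma mem_line_x u v o n g : (g \in line_x u v o n) =
  [&& g.2 == o, fy g == v, u <= fx g & fx g < u + n%:Z].
Proof.
apply/imfsetP/idP => [[k]|]; rewrite /= ?mem_iota.
  by move=> hk ->; rewrite /fx /fy /=; lia.
move: g => [[x y] o'] /=; rewrite /fx /fy /= => h.
exists (absz (x - u)); first by rewrite mem_iota; lia.
apply/eqP; rewrite face_eq; lia.
Qed.
Lemma mem_line_d u v o n g : (g \in line_d u v o n) =
  [&& g.2 == o, fx g + fy g == u + v, u <= fx g & fx g < u + n%:Z].
Proof.
apply/imfsetP/idP => [[k]|]; rewrite /= ?mem_iota.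
  by move=> hk ->; rewrite /fx /fy /=; lia.
move: g => [[x y] o'] /=; rewrite /fx /fy /= => h.
exists (absz (x - u)); first by rewrite mem_iota; lia.
apply/eqP; rewrite face_eq; lia.
Qed.

Lemma sp_Tpoly_le d a b c : (a + b <= d)%N -> (b + c <= d)%N -> (c + a <= d)%N ->
  (site_perimeter (Tpoly d a b c) <= 3 * d - a - b - c)%N.
Proof.
move=> hab hbc hca.
set F1 := line_y (-1) a%:Z false (d - c - a).
set F2 := line_y (d - b)%N%:Z 0 true b.
set F3 := line_x a%:Z (-1) false (d - b - a).
set F4 := line_x 0 (d - c)%N%:Z true c.
set F5 := line_d 0 (a%:Z - 1) true a.
set F6 := line_d c%:Z (d%:Z - 1 - c%:Z) false (d - b - c).
have sub : site_boundary (Tpoly d a b c) `<=` F1 `|` F2 `|` F3 `|` F4 `|` F5 `|` F6.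
  apply/fsubsetP => g; rewrite mem_sb => /andP[hg /hasP[f hf hn]].
  rewrite !in_fsetU /F1 /F2 /F3 /F4 /F5 /F6 !mem_line_y !mem_line_x !mem_line_d.
  move: hg hf hn; rewrite !mem_TpolyE.
  dface f; rewrite /= !inE; move=> hg hf /orP[/eqP e|/orP[/eqP e|/eqP e]];
    move: hg hf; rewrite e /fw /fx /fy /dn /=; lia.
have := fsubset_leq_card sub.
move: (card_line_y (-1) a%:Z false (d - c - a)) (card_line_y (d - b)%N%:Z 0 true b)
  (card_line_x a%:Z (-1) false (d - b - a)) (card_line_x 0 (d - c)%N%:Z true c)
  (card_line_d 0 (a%:Z - 1) true a) (card_line_d c%:Z (d%:Z - 1 - c%:Z) false (d - b - c)).
rewrite -/F1 -/F2 -/F3 -/F4 -/F5 -/F6 => c1 c2 c3 c4 c5 c6.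
move=> h.
rewrite /site_perimeter.
have cu : forall A B : {fset face}, (#|` A `|` B| <= #|` A| + #|` B|)%N.
  by move=> A B; rewrite cardfsU leq_subr.
have := cu (F1 `|` F2 `|` F3 `|` F4 `|` F5) F6.
have := cu (F1 `|` F2 `|` F3 `|` F4) F5.
have := cu (F1 `|` F2 `|` F3) F4.
have := cu (F1 `|` F2) F3.
have := cu F1 F2.
lia.
Qed.

Definition conn (R : {fset face}) f g :=
  exists p, [/\ path adj f p, last f p = g & all (fun h => h \in R) p].

Lemma conn_refl R f : conn R f f.
Proof. by exists [::]. Qed.

Lemma conn_trans R f g h : conn R f g -> conn R g h -> conn R f h.
Proof.
move=> [p [hp hl ha]] [q [hq hl' ha']]; exists (p ++ q).
by rewrite cat_path last_cat hl hp hq hl' all_cat ha ha'.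
Qed.

Lemma conn_step R f g : adj f g -> g \in R -> conn R f g.
Proof. by move=> h hg; exists [:: g]; rewrite /= h hg. Qed.

Lemma conn_sym R f g : f \in R -> conn R f g -> conn R g f.
Proof.
move=> hf [p [hp hl ha]]; exists (rev (belast f p)); split.
- rewrite -hl rev_path; apply: sub_path hp => x y; by rewrite adj_sym.
- rewrite -hl; case: p {hp hl ha} => //= z p.
  by rewrite rev_cons last_rcons.
- rewrite all_rev; apply/allP => x /mem_belast; rewrite inE => /orP[/eqP->//|].
  by move/(allP ha).
Qed.

Ltac un := unfold fw, keyX, fx, fy, dn, Up, Down in *; simpl in *.

Section Conn.
Variables d a b c : nat.
Hypothesis hac : (a + c < d)%N.
Hypothesis hb : (b < d)%N.
Let R := Tpoly d a b c.
Let m := Up 0 a%:Z.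

Lemma m_in : m \in R.
Proof. rewrite /R mem_TpolyE /m /fw /fx /fy /dn /=; lia. Qed.


Lemma LA n f : f \in R -> fw f = a%:Z -> (absz (keyX f) <= n)%N -> conn R f m.
Proof.
elim: n f => [|n IH] f.
  dface f => hf hw hk; move: (hf); rewrite /R mem_TpolyE; un => hf'.
    have -> : m = (x, y, true) by rewrite /m /Up; apply/eqP; rewrite face_eq; lia.
    exact: conn_refl.
  lia.
dface f => hf hw hk; move: (hf); rewrite /R mem_TpolyE; un => hf'.
- have [hx|hx] := eqVneq x 0.
    have -> : m = (x, y, true) by rewrite /m /Up; apply/eqP; rewrite face_eq; lia.
    exact: conn_refl.
  have hg : Down (x - 1) y \in R by rewrite /R mem_TpolyE; un; lia.
  apply: conn_trans (conn_step _ hg) (IH _ hg _ _).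
  + by rewrite /adj /= !inE eqxx orbT.
  + un; lia.
  + un; lia.
- have hg : Up x (y + 1) \in R by rewrite /R mem_TpolyE; un; lia.
  apply: conn_trans (conn_step _ hg) (IH _ hg _ _).
  + by rewrite /adj /= !inE eqxx ?orbT.
  + un; lia.
  + un; lia.
Qed.

Lemma LB n f : f \in R -> (absz (fw f - a%:Z) <= n)%N -> conn R f m.
Proof.
elim: n f => [|n IH] f.
  move=> hf hw; apply: (LA (n := absz (keyX f))) => //.
  have := fw_bnd f; move: hf; rewrite /R mem_TpolyE; lia.
move=> hf hw.
have [e|ne] := eqVneq (fw f) a%:Z; first exact: (LA (n := absz (keyX f))).
move: hf hw ne; dface f => hf hw ne; move: (hf); rewrite /R mem_TpolyE; un => hf'.
- have [hx|hx] := eqVneq x 0.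
    have hg1 : Down x (y - 1) \in R by rewrite /R mem_TpolyE; un; lia.
    have hg2 : Up x (y - 1) \in R by rewrite /R mem_TpolyE; un; lia.
    apply: conn_trans (conn_step _ hg1) (conn_trans (conn_step _ hg2) (IH _ hg2 _)).
    + by rewrite /adj /= !inE eqxx ?orbT.
    + by rewrite /adj /= !inE eqxx ?orbT.
    + un; lia.
  have hg1 : Down (x - 1) y \in R by rewrite /R mem_TpolyE; un; lia.
  have hg2 : Up (x - 1) y \in R by rewrite /R mem_TpolyE; un; lia.
  apply: conn_trans (conn_step _ hg1) (conn_trans (conn_step _ hg2) (IH _ hg2 _)).
  + by rewrite /adj /= !inE eqxx ?orbT.
  + by rewrite /adj /= !inE eqxx ?orbT.
  + un; lia.
- have hg : Up x y \in R by rewrite /R mem_TpolyE; un; lia.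
  apply: conn_trans (conn_step _ hg) (IH _ hg _).
  + by rewrite /adj /= !inE eqxx ?orbT.
  + un; lia.
Qed.

Lemma Tpoly_poly : polyiamond R.
Proof.
split; first by apply/fset0Pn; exists m; apply: m_in.
move=> f g hf hg.
have := conn_trans (LB (n := absz (fw f - a%:Z)) hf (leqnn _)) (conn_sym hg (LB (n := absz (fw g - a%:Z)) hg (leqnn _))).

by [].
Qed.

End Conn.


Definition bx := (int * int * int * int * int * int)%type.
Definition inB (b : bx) (f : face) : bool :=
  let: (x0, x1, y0, y1, w0, w1) := b in
  [&& x0 <= fx f, fx f <= x1, y0 <= fy f, fy f <= y1, w0 <= fw f & fw f <= w1].

Definition act_transl u v (b : bx) : bx :=
  let: (x0, x1, y0, y1, w0, w1) := b in (x0 + u, x1 + u, y0 + v, y1 + v, w0 + u + v, w1 + u + v).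
Definition act_rot (b : bx) : bx :=
  let: (x0, x1, y0, y1, w0, w1) := b in (-1 - y1, -1 - y0, w0, w1, x0, x1).
Definition act_refl (b : bx) : bx :=
  let: (x0, x1, y0, y1, w0, w1) := b in (y0, y1, x0, x1, w0, w1).

Definition rotinv (f : face) : face :=
  let: (x, y, o) := f in (x + y + (if o then 0 else 1), -1 - x, ~~ o).

Lemma rotK f : rot60 (rotinv f) = f.
Proof. dface f; rewrite /= /Up /Down; apply/eqP; rewrite face_eq; lia. Qed.
Lemma reflK f : refl (refl f) = f. Proof. by dface f. Qed.


Lemma inB_transl u v b f : inB (act_transl u v b) (transl u v f) = inB b f.
Proof. case: b => [[[[[x0 x1] y0] y1] w0] w1]; dface f; rewrite /=; un; lia. Qed.
Lemma inB_rot b f : inB (act_rot b) (rot60 f) = inB b f.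
Proof. case: b => [[[[[x0 x1] y0] y1] w0] w1]; dface f; rewrite /=; un; lia. Qed.
Lemma inB_refl b f : inB (act_refl b) (refl f) = inB b f.
Proof. case: b => [[[[[x0 x1] y0] y1] w0] w1]; dface f; rewrite /=; un; lia. Qed.

Definition gsym u v k (e : bool) (f : face) : face :=
  transl u v (iter k rot60 (if e then refl f else f)).
Definition act_g u v k (e : bool) (b : bx) : bx :=
  act_transl u v (iter k act_rot (if e then act_refl b else b)).

Lemma inB_g u v k e b f : inB (act_g u v k e b) (gsym u v k e f) = inB b f.
Proof.
rewrite /act_g /gsym inB_transl.
have -> : inB (iter k act_rot (if e then act_refl b else b)) (iter k rot60 (if e then refl f else f))
  = inB (if e then act_refl b else b) (if e then refl f else f).
  by elim: k => //= k IH; rewrite inB_rot.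
by case: e; rewrite ?inB_refl.
Qed.

Lemma gsym_surj u v k e f' : exists f, gsym u v k e f = f'.
Proof.
have [f1 e1] : exists f1, transl u v f1 = f' by exists (transl (- u) (- v) f'); apply: transl_can'.
have [f2 e2] : exists f2, iter k rot60 f2 = f1.
  elim: k f1 {e1} => [|k IH] f1; first by exists f1.
  have [f3 e3] := IH (rotinv f1); exists f3; by rewrite iterS e3 rotK.
exists (if e then refl f2 else f2); rewrite /gsym; case: e; by rewrite ?reflK e2 e1.
Qed.

Lemma gsym_lattice u v k e : lattice_sym (gsym u v k e).
Proof. by exists u, v, k, e. Qed.

Lemma image_box (S : {fset face}) b u v k e :
  (forall f, (f \in S) = inB b f) ->
  forall f, (f \in gsym u v k e @` S) = inB (act_g u v k e b) f.
Proof.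
move=> hS f; apply/imfsetP/idP => [[g hg ->]|h]; first by rewrite inB_g -hS.
have [g hg] := gsym_surj u v k e f.
exists g => //; rewrite hS -(inB_g u v k e) hg //.
Qed.

Definition bT (d a b c : nat) : bx :=
  (0, (d - b)%N%:Z - 1, 0, (d - c)%N%:Z - 1, a%:Z, d%:Z - 1).

Lemma mem_Tpoly_box d a b c f : (f \in Tpoly d a b c) = inB (bT d a b c) f.
Proof. rewrite mem_TpolyE /bT /=; lia. Qed.

Definition bshape (b : bx) : int * int * int * int :=
  let: (x0, x1, y0, y1, w0, w1) := b in (x1 - x0, y1 - y0, w0 - x0 - y0, w1 - x0 - y0).

Lemma shape_transl u v b : bshape (act_transl u v b) = bshape b.
Proof. case: b => [[[[[x0 x1] y0] y1] w0] w1] /=; congr (_, _, _, _); lia. Qed.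

Lemma shape_eq (b1 b2 : bx) : bshape b1 = bshape b2 -> exists u v, act_transl u v b1 = b2.
Proof.
case: b1 => [[[[[x0 x1] y0] y1] w0] w1]; case: b2 => [[[[[x0' x1'] y0'] y1'] w0'] w1'] /= [] h1 h2 h3 h4.
exists (x0' - x0), (y0' - y0); congr (_, _, _, _, _, _); lia.
Qed.

Lemma sym_match (P E : {fset face}) (x0 y0 : int) (D A B C : nat) bE k e :
  P = transl x0 y0 @` Tpoly D A B C ->
  (forall f, (f \in E) = inB bE f) ->
  bshape (iter k act_rot (if e then act_refl bE else bE)) = bshape (bT D A B C) ->
  exists g, lattice_sym g /\ P = g @` E.
Proof.
move=> -> hE hs.
have [u [v huv]] : exists u v, act_transl u v (iter k act_rot (if e then act_refl bE else bE))
   = act_transl x0 y0 (bT D A B C).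
  by apply: shape_eq; rewrite shape_transl.
exists (gsym u v k e); split; first exact: gsym_lattice.
apply/fsetP => f.
rewrite (image_box _ _ _ _ hE) /act_g huv.
have -> : transl x0 y0 = gsym x0 y0 0 false by [].
by rewrite (image_box (b := bT D A B C)) //; move=> g; rewrite mem_Tpoly_box.
Qed.

Definition mi (i : nat) : int :=
  match i with 0 => 0 | 1 => 7 | 2 => 4 | 3 => 3 | 4 => 4 | _ => 7 end.

Definition Qf (D A B C : int) : int :=
  3 * (D - A - B - C) ^+ 2 + 2 * ((A - B) ^+ 2 + (B - C) ^+ 2 + (C - A) ^+ 2).

Lemma ident (D A B C : int) :
  6 * (D ^+ 2 - A ^+ 2 - B ^+ 2 - C ^+ 2) = (3 * D - A - B - C) ^+ 2 - Qf D A B C.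
Proof. rewrite /Qf !expr2. lia. Qed.

Lemma sq1 (z : int) : z != 0 -> 1 <= z ^+ 2.
Proof. rewrite expr2 => hz; nia. Qed.
Lemma sq0 (z : int) : 0 <= z ^+ 2.
Proof. rewrite expr2; nia. Qed.

Lemma S2 (A B C : int) : ~ (A = B /\ B = C) -> 2 <= (A - B) ^+ 2 + (B - C) ^+ 2 + (C - A) ^+ 2.
Proof.
move=> h.
have [e1|n1] := eqVneq A B.
  have n2 : B - C != 0 by apply/eqP => e; apply: h; split; lia.
  have n3 : C - A != 0 by apply/eqP => e; apply: h; split; lia.
  have := sq1 n2; have := sq1 n3; have := sq0 (A - B); lia.
have n1' : A - B != 0 by apply/eqP => e; move/eqP: n1; lia.
have [e2|n2] := eqVneq B C.
  have n3 : C - A != 0 by apply/eqP => e; move/eqP: n1; lia.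
  have := sq1 n1'; have := sq1 n3; have := sq0 (B - C); lia.
have n2' : B - C != 0 by apply/eqP => e; move/eqP: n2; lia.
have := sq1 n1'; have := sq1 n2'; have := sq0 (C - A); lia.
Qed.

Lemma Qlow (r : int) (j : nat) (D A B C : int) : (j < 6)%N ->
  3 * D - A - B - C = 6 * r + j%:Z -> mi j <= Qf D A B C.
Proof.
move=> hj hp.
have q0 := sq0 (D - A - B - C).
have s0 := sq0 (A - B); have s1 := sq0 (B - C); have s2 := sq0 (C - A).
have odd_e : odd j -> 1 <= (D - A - B - C) ^+ 2.
  move=> ho; apply: sq1; apply/eqP => e.
  move: hj ho hp; case: j => [|[|[|[|[|[|]]]]]] //= _ _; lia.
have m3 : (j != 0%N) && (j != 3%N) -> 2 <= (A - B) ^+ 2 + (B - C) ^+ 2 + (C - A) ^+ 2.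
  move=> hj3; apply: S2 => -[e1 e2].
  clear odd_e; move: hj hj3 hp; case: j => [|[|[|[|[|[|]]]]]] //= _ _; lia.
rewrite /Qf.
move: hj hp odd_e m3; case: j => [|[|[|[|[|[|]]]]]] //= _ _; lia.
Qed.

Lemma arith (r : int) (i : nat) (D A B C : int) : 1 <= r -> (i < 6)%N ->
  0 <= A -> 0 <= B -> 0 <= C -> A + B <= D -> B + C <= D -> C + A <= D ->
  3 * D - A - B - C <= 6 * r + i%:Z ->
  [/\ 6 * (D ^+ 2 - A ^+ 2 - B ^+ 2 - C ^+ 2) <= (6 * r + i%:Z) ^+ 2 - mi i,
      3 * D - A - B - C < 6 * r + i%:Z ->
        6 * (D ^+ 2 - A ^+ 2 - B ^+ 2 - C ^+ 2) < (6 * r + i%:Z) ^+ 2 - mi i &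
      6 * (D ^+ 2 - A ^+ 2 - B ^+ 2 - C ^+ 2) = (6 * r + i%:Z) ^+ 2 - mi i ->
        3 * D - A - B - C = 6 * r + i%:Z /\ Qf D A B C = mi i].
Proof.
move=> hr hi hA hB hC hAB hBC hCA hp.
rewrite ident.
set p := 3 * D - A - B - C.
have hp0 : 0 <= p by rewrite /p; lia.
have hQ0 : 0 <= Qf D A B C.
  rewrite /Qf; have := sq0 (D - A - B - C); have := sq0 (A - B);
  have := sq0 (B - C); have := sq0 (C - A); lia.
have [lo|hi6] := ltrP p (6 * r).
  have h1 : p ^+ 2 <= (6 * r - 1) ^+ 2 by rewrite !expr2; nia.
  have h2 : (6 * r - 1) ^+ 2 < (6 * r + i%:Z) ^+ 2 - mi i.
    by clear hp; move: hi; rewrite !expr2; case: i => [|[|[|[|[|[|]]]]]] //= _; lia.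
  split; try lia.
pose j := absz (p - 6 * r)%R.
have hj : p = 6 * r + j%:Z by rewrite /j; lia.
have hji : (j <= i)%N by rewrite /j; lia.
have hQ := @Qlow r j D A B C ltac:(lia) hj.
clearbody p j. subst p.
clear hp hp0 hi6; move: hi hji hQ; rewrite !expr2.
case: i => [|[|[|[|[|[|]]]]]] //= _; case: j => [|[|[|[|[|[|]]]]]] //= _ hQ; split; lia.
Qed.

Lemma transl_back (P : {fset face}) x0 y0 :
  transl x0 y0 @` (transl (- x0) (- y0) @` P) = P.
Proof.
apply/fsetP => f; rewrite !mem_transl !opprK transl_can' //.
Qed.

Lemma poly_bound (P : {fset face}) : polyiamond P ->
  exists (x0 y0 : int) (D A B C : nat),
  [/\ (A + B <= D)%N, (B + C <= D)%N, (C + A <= D)%N,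
      (3 * D <= site_perimeter P + A + B + C)%N &
      (#|` P| + A * A + B * B + C * C <= D * D)%N /\
      ((#|` P| + A * A + B * B + C * C = D * D)%N -> P = transl x0 y0 @` Tpoly D A B C)].
Proof.
move=> hP.
have [x0 [y0 [D [A [B [C [hAB hBC hCA hs hsub]]]]]]] := box hP.
exists x0, y0, D, A, B, C.
have hc := card_Tpoly hAB hBC hCA.
have cP : #|` transl (- x0) (- y0) @` P| = #|` P| by apply: card_transl.
have le := fsubset_leq_card hsub.
split => //; split; first by lia.
move=> heq.
have ec : #|` transl (- x0) (- y0) @` P| = #|` Tpoly D A B C| by lia.
have e := elimT (fsubset_cardP ec) hsub. move/fsetP: e => e; apply/fsetP => f; by rewrite mem_transl -e mem_transl !opprK transl_can'.
Qed.

Lemma main_gen (r i d a b c : nat) (Ebig : {fset face}) :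
  (1 <= r)%N -> (i < 6)%N -> Ebig = Tpoly d a b c ->
  (a + c < d)%N -> (b < d)%N -> (a + b <= d)%N -> (b + c <= d)%N -> (c + a <= d)%N ->
  (3 * d = 6 * r + i + a + b + c)%N ->
  6 * (d%:Z ^+ 2 - a%:Z ^+ 2 - b%:Z ^+ 2 - c%:Z ^+ 2) = (6 * r%:Z + i%:Z) ^+ 2 - mi i ->
  (forall D A B C : nat, (A + B <= D)%N -> (B + C <= D)%N -> (C + A <= D)%N ->
     3 * D%:Z - A%:Z - B%:Z - C%:Z = 6 * r%:Z + i%:Z -> Qf D%:Z A%:Z B%:Z C%:Z = mi i ->
     exists k e, bshape (iter k act_rot (if e then act_refl (bT d a b c) else bT d a b c))
       = bshape (bT D A B C)) ->
  [/\ polyiamond Ebig,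
      site_perimeter Ebig = (6 * r + i)%N,
      (forall P : {fset face}, polyiamond P -> site_perimeter P = (6 * r + i)%N ->
         (area P <= area Ebig)%N) &
      (forall P : {fset face}, polyiamond P -> site_perimeter P = (6 * r + i)%N ->
         area P = area Ebig ->
         exists g : face -> face, lattice_sym g /\ P = g @` Ebig)].
Proof.
move=> hr hi -> hac hb hab hbc hca hp hA hsym.
have cE := card_Tpoly hab hbc hca.
have hpoly := Tpoly_poly hac hb.
have Eb : 6 * (#|` Tpoly d a b c|)%:Z = (6 * r%:Z + i%:Z) ^+ 2 - mi i.
  by rewrite -hA !expr2; lia.
have gen : forall P, polyiamond P -> (site_perimeter P <= 6 * r + i)%N ->
  exists (x0 y0 : int) (D A B C : nat),
   [/\ (A + B <= D)%N, (B + C <= D)%N, (C + A <= D)%N,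
       6 * (#|` P|)%:Z <= (6 * r%:Z + i%:Z) ^+ 2 - mi i &
       (6 * (#|` P|)%:Z = (6 * r%:Z + i%:Z) ^+ 2 - mi i ->
         [/\ (site_perimeter P = 6 * r + i)%N, P = transl x0 y0 @` Tpoly D A B C,
             3 * D%:Z - A%:Z - B%:Z - C%:Z = 6 * r%:Z + i%:Z & Qf D%:Z A%:Z B%:Z C%:Z = mi i])].
  move=> P hP hs.
  have [x0 [y0 [D [A [B [C [hAB hBC hCA hsP [hle heq]]]]]]]] := poly_bound hP.
  have [h1 h2 h3] := @arith r%:Z i D%:Z A%:Z B%:Z C%:Z ltac:(lia) hi ltac:(lia) ltac:(lia)
     ltac:(lia) ltac:(lia) ltac:(lia) ltac:(lia) ltac:(lia).
  exists x0, y0, D, A, B, C; split => //.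
    move: h1; rewrite !expr2; lia.
  move=> e.
  have eq6 : 6 * (D%:Z ^+ 2 - A%:Z ^+ 2 - B%:Z ^+ 2 - C%:Z ^+ 2) = (6 * r%:Z + i%:Z) ^+ 2 - mi i.
    move: h1 e; rewrite !expr2; lia.
  have [hp' hq] := h3 eq6.
  split => //.
  - lia.
  - apply: heq; move: eq6 e; rewrite !expr2; lia.
split => //.
- apply/eqP; rewrite eqn_leq; apply/andP; split.
    by have := sp_Tpoly_le hab hbc hca; lia.
  rewrite leqNgt; apply/negP => hlt.
  have [x0 [y0 [D [A [B [C [hAB hBC hCA hsP [hle heq]]]]]]]] := poly_bound hpoly.
  have [h1 h2 h3] := @arith r%:Z i D%:Z A%:Z B%:Z C%:Z ltac:(lia) hi ltac:(lia) ltac:(lia)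
     ltac:(lia) ltac:(lia) ltac:(lia) ltac:(lia) ltac:(lia).
  have := h2 ltac:(lia); move: Eb hle; rewrite !expr2; lia.
- move=> P hP hs.
  have [x0 [y0 [D [A [B [C [hAB hBC hCA hle _]]]]]]] := gen P hP ltac:(lia).
  rewrite /area; move: hle Eb; lia.
- move=> P hP hs harea.
  have [x0 [y0 [D [A [B [C [hAB hBC hCA hle heq]]]]]]] := gen P hP ltac:(lia).
  have [_ hPe hp' hq] := heq ltac:(move: Eb harea; rewrite /area; lia).
  have [k [e hk]] := hsym D A B C hAB hBC hCA hp' hq.
  apply: (sym_match hPe _ hk) => f; exact: mem_Tpoly_box.
Qed.

Lemma sq_small (z : int) : z ^+ 2 <= 3 -> -1 <= z <= 1.
Proof. rewrite expr2 => h; nia. Qed.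

Lemma qsmall (D A B C : int) : Qf D A B C <= 7 ->
  [/\ -1 <= D - A - B - C <= 1, -1 <= A - B <= 1 & -1 <= B - C <= 1].
Proof.
rewrite /Qf => h.
have := sq0 (D - A - B - C); have := sq0 (A - B); have := sq0 (B - C); have := sq0 (C - A).
move=> s1 s2 s3 s4.
split; apply: sq_small; lia.
Qed.

Lemma qcases (D A B C : int) : Qf D A B C <= 7 ->
  exists e1 e2 e3 : int, [/\ D - A - B - C = e1, A - B = e2 & B - C = e3] /\
    [/\ (e1 == -1) || (e1 == 0) || (e1 == 1), (e2 == -1) || (e2 == 0) || (e2 == 1) &
    (e3 == -1) || (e3 == 0) || (e3 == 1)].
Proof.
move=> /qsmall [h1 h2 h3].
exists (D - A - B - C), (A - B), (B - C); split; split => //; lia.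
Qed.

Ltac fin_sym := rewrite /bT /= ; congr (_, _, _, _); lia.
Ltac try_sym :=
  first [ exists 0%N, false; fin_sym | exists 1%N, false; fin_sym | exists 2%N, false; fin_sym
        | exists 3%N, false; fin_sym | exists 4%N, false; fin_sym | exists 5%N, false; fin_sym
        | exists 0%N, true; fin_sym | exists 1%N, true; fin_sym | exists 2%N, true; fin_sym
        | exists 3%N, true; fin_sym | exists 4%N, true; fin_sym | exists 5%N, true; fin_sym ].

Definition symhyp (r i d a b c : nat) :=
  forall D A B C : nat, (A + B <= D)%N -> (B + C <= D)%N -> (C + A <= D)%N ->
     3 * D%:Z - A%:Z - B%:Z - C%:Z = 6 * r%:Z + i%:Z -> Qf D%:Z A%:Z B%:Z C%:Z = mi i ->
     exists k e, bshape (iter k act_rot (if e then act_refl (bT d a b c) else bT d a b c))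
       = bshape (bT D A B C).

Lemma case0 r : (1 <= r)%N -> symhyp r 0 (3 * r) r r r. Proof.
move=> hr D A B C hAB hBC hCA hp hq.
have [e1 [e2 [e3 [[E1 E2 E3] [h1 h2 h3]]]]] := @qcases D%:Z A B C ltac:(rewrite hq /=; lia).
have E4 : C%:Z - A%:Z = - (e2 + e3) by lia.
move: h1 h2 h3 => /orP[/orP[]|] /eqP he1 /orP[/orP[]|] /eqP he2 /orP[/orP[]|] /eqP he3;
  rewrite he1 he2 he3 in E1 E2 E3 E4; move: hq; rewrite /Qf E1 E2 E3 E4 /= => hq; try lia.
all: try_sym.
Qed.
Lemma case1 r : (1 <= r)%N -> symhyp r 1 (3 * r) r.-1 r r. Proof.
move=> hr D A B C hAB hBC hCA hp hq.
have [e1 [e2 [e3 [[E1 E2 E3] [h1 h2 h3]]]]] := @qcases D%:Z A B C ltac:(rewrite hq /=; lia).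
have E4 : C%:Z - A%:Z = - (e2 + e3) by lia.
move: h1 h2 h3 => /orP[/orP[]|] /eqP he1 /orP[/orP[]|] /eqP he2 /orP[/orP[]|] /eqP he3;
  rewrite he1 he2 he3 in E1 E2 E3 E4; move: hq; rewrite /Qf E1 E2 E3 E4 /= => hq; try lia.
all: try_sym.
Qed.
Lemma case2 r : (1 <= r)%N -> symhyp r 2 (3 * r).+1 r r r.+1. Proof.
move=> hr D A B C hAB hBC hCA hp hq.
have [e1 [e2 [e3 [[E1 E2 E3] [h1 h2 h3]]]]] := @qcases D%:Z A B C ltac:(rewrite hq /=; lia).
have E4 : C%:Z - A%:Z = - (e2 + e3) by lia.
move: h1 h2 h3 => /orP[/orP[]|] /eqP he1 /orP[/orP[]|] /eqP he2 /orP[/orP[]|] /eqP he3;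
  rewrite he1 he2 he3 in E1 E2 E3 E4; move: hq; rewrite /Qf E1 E2 E3 E4 /= => hq; try lia.
all: try_sym.
Qed.
Lemma case3 r : (1 <= r)%N -> symhyp r 3 (3 * r).+1 r r r. Proof.
move=> hr D A B C hAB hBC hCA hp hq.
have [e1 [e2 [e3 [[E1 E2 E3] [h1 h2 h3]]]]] := @qcases D%:Z A B C ltac:(rewrite hq /=; lia).
have E4 : C%:Z - A%:Z = - (e2 + e3) by lia.
move: h1 h2 h3 => /orP[/orP[]|] /eqP he1 /orP[/orP[]|] /eqP he2 /orP[/orP[]|] /eqP he3;
  rewrite he1 he2 he3 in E1 E2 E3 E4; move: hq; rewrite /Qf E1 E2 E3 E4 /= => hq; try lia.
all: try_sym.
Qed.
Lemma case4 r : (1 <= r)%N -> symhyp r 4 (3 * r).+2 r r.+1 r.+1. Proof.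
move=> hr D A B C hAB hBC hCA hp hq.
have [e1 [e2 [e3 [[E1 E2 E3] [h1 h2 h3]]]]] := @qcases D%:Z A B C ltac:(rewrite hq /=; lia).
have E4 : C%:Z - A%:Z = - (e2 + e3) by lia.
move: h1 h2 h3 => /orP[/orP[]|] /eqP he1 /orP[/orP[]|] /eqP he2 /orP[/orP[]|] /eqP he3;
  rewrite he1 he2 he3 in E1 E2 E3 E4; move: hq; rewrite /Qf E1 E2 E3 E4 /= => hq; try lia.
all: try_sym.
Qed.
Lemma case5 r : (1 <= r)%N -> symhyp r 5 (3 * r).+2 r r r.+1. Proof.
move=> hr D A B C hAB hBC hCA hp hq.
have [e1 [e2 [e3 [[E1 E2 E3] [h1 h2 h3]]]]] := @qcases D%:Z A B C ltac:(rewrite hq /=; lia).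
have E4 : C%:Z - A%:Z = - (e2 + e3) by lia.
move: h1 h2 h3 => /orP[/orP[]|] /eqP he1 /orP[/orP[]|] /eqP he2 /orP[/orP[]|] /eqP he3;
  rewrite he1 he2 he3 in E1 E2 E3 E4; move: hq; rewrite /Qf E1 E2 E3 E4 /= => hq; try lia.
all: try_sym.
Qed.

End Aux.
Import Aux.
Local Open Scope fset_scope.

Theorem proposition7p2 (r i : nat) (hr : (1 <= r)%N) (hi : (i < 6)%N) :
  [/\ polyiamond (EB i r),
      site_perimeter (EB i r) = (6 * r + i)%N,
      (forall P : {fset face}, polyiamond P -> site_perimeter P = (6 * r + i)%N ->
         (area P <= area (EB i r))%N) &
      (forall P : {fset face}, polyiamond P -> site_perimeter P = (6 * r + i)%N ->
         area P = area (EB i r) ->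
         exists g : face -> face, lattice_sym g /\ P = g @` EB i r)].
Proof.
case: r hr => // r' _; set r := r'.+1.
move: hi; case: i => [|[|[|[|[|[|//]]]]]] _.
- apply: (main_gen (d := 3 * r) (a := r) (b := r) (c := r)) => //; rewrite ?/r; try lia.
    by rewrite /mi !GRing.expr2; lia.
  exact: case0.
- apply: (main_gen (d := 3 * r) (a := r.-1) (b := r) (c := r)) => //; rewrite ?/r; try lia.
    by rewrite /mi !GRing.expr2 /=; lia.
  exact: case1.
- apply: (main_gen (d := (3 * r).+1) (a := r) (b := r) (c := r.+1)) => //; rewrite ?/r; try lia.
    by rewrite /mi !GRing.expr2; lia.
  exact: case2.
- apply: (main_gen (d := (3 * r).+1) (a := r) (b := r) (c := r)) => //; rewrite ?/r; try lia.
    by rewrite /mi !GRing.expr2; lia.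
  exact: case3.
- apply: (main_gen (d := (3 * r).+2) (a := r) (b := r.+1) (c := r.+1)) => //; rewrite ?/r; try lia.
    by rewrite /mi !GRing.expr2; lia.
  exact: case4.
- apply: (main_gen (d := (3 * r).+2) (a := r) (b := r) (c := r.+1)) => //; rewrite ?/r; try lia.
    by rewrite /mi !GRing.expr2; lia.
  exact: case5.
Qed.
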